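(* In the setting below with $P=\mathfrak S$ and the absolute error criterion: (i) if $\{S_d\}$ is polynomially tractable and $\lambda_1\ge1$, then $b_d\in O(\ln d)$; (ii) if $\{S_d\}$ is strongly polynomially tractable and $\lambda_1\ge1$, then $b_d\in O(1)$ and $\lambda_2<1/\lambda_1$.
   Context: Setting: $S_1:H_1\to G_1$ is a compact linear operator between real Hilbert spaces ($H_1$ infinite-dimensional separable); $\lambda=(\lambda_m)_{m\in\mathbb N}$, $\lambda_1\ge\lambda_2\ge\dots\ge0$, are the eigenvalues of $S_1^\dagger S_1$. $S_d=S_1^{\otimes d}:H_1^{\otimes d}\to G_1^{\otimes d}$. For each $d$ fix $\emptyset\ne I_d=\{i_1<\dots<i_{a_d}\}\subset\{1,\dots,d\}$ ($I_1=\{1\}$), put $a_d=\#I_d$, $b_d=d-a_d$, and fix one type $P\in\{\mathfrak S,\mathfrak A\}$ for all $d$; the problem $\{S_d\}$ is the family of restrictions of $S_d$ to the $I_d$-symmetric subspace (if $P=\mathfrak S$) or $I_d$-antisymmetric subspace (if $P=\mathfrak A$) of $H_1^{\otimes d}$, i.e. the range of $\frac1{a_d!}\sum_{\pi}(\pm1)U_\pi$, the sum over permutations $\pi$ of $\{1,\dots,d\}$ fixing all points outside $I_d$, $U_\pi(f_1\otimes\cdots\otimes f_d)=f_{\pi(1)}\otimes\cdots\otimes f_{\pi(d)}$, sign $(-1)^{|\pi|}$ used for $\mathfrak A$. Let $\nabla_d=\{k\in\mathbb N^d:k_{i_1}\le\dots\le k_{i_{a_d}}\}$ for $P=\mathfrak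 S$ and with strict inequalities for $P=\mathfrak A$; $\lambda_{d,k}=\prod_{l=1}^d\lambda_{k_l}$; $\psi:\mathbb N\to\nabla_d$ a bijection with $\lambda_{d,\psi(1)}\ge\lambda_{d,\psi(2)}\ge\cdots$. These are exactly the eigenvalues of $S_d^\dagger S_d$ on the subspace, and the information complexity (absolute error) is $n(\epsilon,d)=\#\{k\in\nabla_d:\lambda_{d,k}>\epsilon^2\}$, the initial error $\epsilon^{\rm init}_d=\sqrt{\lambda_{d,\psi(1)}}$ (equal to $\lambda_1^{d/2}$ if $P=\mathfrak S$, and $\sqrt{\lambda_1^{b_d}\lambda_1\lambda_2\cdots\lambda_{a_d}}$ if $P=\mathfrak A$). Polynomially tractable: $\exists C,p>0,q\ge0$ with $n(\epsilon,d)\le C\epsilon^{-p}d^q$ for all $d\in\mathbb N,\epsilon\in(0,1]$; strongly polynomially tractable: this with $q=0$. Standing assumptions: $\lambda_2>0$ and $\epsilon_d^{\rm init}>0$ for all $d$. $\ell_\tau$: sequences with $\|\lambda\|_{\ell_\tau}^\tau=\sum_m\lambda_m^\tau<\infty$. *)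

(* Defs.v *)
From Stdlib Require Import Reals Lra Lia List.
Open Scope R_scope.

(* Conventions (0-based): lam m is the paper's lambda_{m+1}; so lam 0 = lambda_1,
   lam 1 = lambda_2.  A multi-index k in N^d is a list of length d whose
   entry at position l (0-based) is the 0-based index of the eigenvalue. *)

Definition lam_prod (lam : nat -> R) (k : list nat) : R :=
  fold_right (fun m acc => lam m * acc) 1 k.

(* I d i : position i (0-based, i < d) belongs to I_d. *)
Definition in_nabla_sym (I : nat -> nat -> bool) (d : nat) (k : list nat) : Prop :=
  length k = d /\
  forall i j, (i < j < d)%nat -> I d i = true -> I d j = true ->
    (nth i k 0 <= nth j k 0)%nat.

(* "n(eps,d) <= M":  the set {k in nabla_d : lambda_{d,k} > eps^2}
   has cardinality at most M (every finite duplicate-free list of its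
   elements has length at most M). *)
Definition info_compl_le (lam : nat -> R) (I : nat -> nat -> bool)
  (eps : R) (d : nat) (M : R) : Prop :=
  forall L : list (list nat), NoDup L ->
    (forall k, In k L -> in_nabla_sym I d k /\ lam_prod lam k > eps ^ 2) ->
    INR (length L) <= M.

Definition poly_tractable (lam : nat -> R) (I : nat -> nat -> bool) : Prop :=
  exists C p q : R, C > 0 /\ p > 0 /\ q >= 0 /\
    forall (d : nat) (eps : R), (1 <= d)%nat -> 0 < eps <= 1 ->
      info_compl_le lam I eps d (C * Rpower eps (- p) * Rpower (INR d) q).

Definition strongly_poly_tractable (lam : nat -> R) (I : nat -> nat -> bool) : Prop :=
  exists C p : R, C > 0 /\ p > 0 /\
    forall (d : nat) (eps : R), (1 <= d)%nat -> 0 < eps <= 1 ->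
      info_compl_le lam I eps d (C * Rpower eps (- p)).

Fixpoint count_below (P : nat -> bool) (n : nat) : nat :=
  match n with
  | O => O
  | S n' => (count_below P n' + (if P n' then 1 else 0))%nat
  end.
Definition a_of (I : nat -> nat -> bool) (d : nat) : nat := count_below (I d) d.
Definition b_of (I : nat -> nat -> bool) (d : nat) : nat := (d - a_of I d)%nat.

Definition index_family (I : nat -> nat -> bool) : Prop :=
  (forall d i, I d i = true -> (i < d)%nat) /\
  (forall d, (1 <= d)%nat -> exists i, (i < d)%nat /\ I d i = true).

(* Main.v *)
Require Import Defs.
From Stdlib Require Import Reals Lra Lia List FinFun.
Open Scope R_scope.

Fixpoint pc (m j : nat) : nat :=
  match m with
  | O => match j with O => 1%nat | S _ => 0%nat end
  | S m' => match j with O => 1%nat | S j' => (pc m' (S j') + pc m' j')%nat end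
  end.

Lemma pc_0 m : pc m 0 = 1%nat. Proof. destruct m; reflexivity. Qed.

Lemma pc_mono m j : (pc m j <= pc (S m) j)%nat.
Proof. destruct j; simpl; [destruct m; simpl; lia| lia]. Qed.

Lemma pc_mono_add m t j : (pc m j <= pc (m + t) j)%nat.
Proof. induction t. rewrite Nat.add_0_r; lia.
  rewrite Nat.add_succ_r. pose proof (pc_mono (m+t) j). lia. Qed.

Lemma pc_step m t j : (t * pc m j <= pc (m + t) (S j))%nat.
Proof. induction t. simpl; lia.
  rewrite Nat.add_succ_r. simpl pc. pose proof (pc_mono_add m t j). nia. Qed.

Lemma pc_pow M j : (M ^ j <= pc (M * j) j)%nat.
Proof. induction j. simpl. rewrite Nat.mul_0_r; simpl; lia.
  replace (M * S j)%nat with (M*j + M)%nat by lia.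
  pose proof (pc_step (M*j) M j). simpl Nat.pow. nia. Qed.

Fixpoint gen (P : nat -> bool) (i n j : nat) : list (list nat) :=
  match n with
  | O => match j with O => cons nil nil | S _ => nil end
  | S n' => if P i then map (cons 0%nat) (gen P (S i) n' j)
            else map (cons 0%nat) (gen P (S i) n' j) ++
                 match j with O => nil | S j' => map (cons 1%nat) (gen P (S i) n' j') end
  end.

Fixpoint fc (P : nat -> bool) (i n : nat) : nat :=
  match n with O => O | S n' => ((if P i then 0 else 1) + fc P (S i) n')%nat end.

Lemma gen_len P n : forall i j, length (gen P i n j) = pc (fc P i n) j.
Proof. induction n; intros i j; simpl.
  - destruct j; reflexivity.
  - destruct (P i); simpl.
    + rewrite length_map; auto.
    + rewrite length_app, length_map, IHn. destruct j. rewrite pc_0; simpl; lia.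
      rewrite length_map, IHn. reflexivity.
Qed.

Lemma cons_inj (a : nat) : Injective (@cons nat a).
Proof. intros x y H; inversion H; auto. Qed.

Lemma gen_nodup P n : forall i j, NoDup (gen P i n j).
Proof. induction n; intros i j; simpl.
  - destruct j; [apply NoDup_cons; [intros []|constructor]|constructor].
  - destruct (P i).
    + apply Injective_map_NoDup; [apply cons_inj|auto].
    + apply NoDup_app.
      * apply Injective_map_NoDup; [apply cons_inj|auto].
      * destruct j; [constructor|]. apply Injective_map_NoDup; [apply cons_inj|auto].
      * intros a Ha Hb. apply in_map_iff in Ha as [x [<- _]].
        destruct j; [destruct Hb|]. apply in_map_iff in Hb as [y [Hy _]]. discriminate.
Qed.

Lemma gen_prop (lam : nat -> R) (mu : R) P
  (H0 : 1 <= lam 0%nat) (Hmu : 0 < mu) (Hmu1 : mu <= lam 1%nat) n :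
  forall i j x, In x (gen P i n j) ->
    length x = n /\ (forall t, (t < n)%nat -> P (i + t)%nat = true -> nth t x 0%nat = 0%nat)
    /\ lam_prod lam x >= mu ^ j.
Proof. induction n; intros i j x Hx; simpl in Hx.
  - destruct j; [|destruct Hx]. destruct Hx as [<-|[]].
    split; [reflexivity|split]. intros; lia. simpl; lra.
  - assert (Hc0 : forall y, In y (gen P (S i) n j) ->
      length (0%nat :: y) = S n /\ (forall t, (t < S n)%nat -> P (i + t)%nat = true -> nth t (0%nat :: y) 0%nat = 0%nat)
      /\ lam_prod lam (0%nat :: y) >= mu ^ j).
    { intros y Hy. destruct (IHn _ _ _ Hy) as [A [B D]]. split; [simpl; lia|split].
      - intros t Ht HP. destruct t; [reflexivity|]. simpl. apply B; [lia|].
        replace (S i + t)%nat with (i + S t)%nat by lia. auto.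
      - simpl. pose proof (pow_lt mu j Hmu). nra. }
    destruct (P i) eqn:EP.
    + apply in_map_iff in Hx as [y [<- Hy]]. auto.
    + apply in_app_or in Hx as [Hx|Hx].
      * apply in_map_iff in Hx as [y [<- Hy]]. auto.
      * destruct j; [destruct Hx|]. apply in_map_iff in Hx as [y [<- Hy]].
        destruct (IHn _ _ _ Hy) as [A [B D]]. split; [simpl; lia|split].
        -- intros t Ht HP. destruct t. rewrite Nat.add_0_r in HP; congruence.
           simpl. apply B; [lia|]. replace (S i + t)%nat with (i + S t)%nat by lia. auto.
        -- simpl. pose proof (pow_lt mu j Hmu). nra.
Qed.

Lemma fc_S P i n : fc P i (S n) = (fc P i n + (if P (i + n)%nat then 0 else 1))%nat.
Proof. revert i; induction n; intros i. simpl. replace (i + 0)%nat with i by lia. destruct (P i); reflexivity.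
  change (fc P i (S (S n))) with ((if P i then 0 else 1) + fc P (S i) (S n))%nat.
  rewrite IHn. replace (S i + n)%nat with (i + S n)%nat by lia. change (fc P i (S n)) with ((if P i then 0 else 1) + fc P (S i) n)%nat. lia. Qed.

Lemma count_fc P n : (count_below P n + fc P 0 n)%nat = n.
Proof. induction n. reflexivity. rewrite fc_S. simpl. destruct (P n); lia. Qed.

Lemma b_of_fc I d : b_of I d = fc (I d) 0 d.
Proof. unfold b_of, a_of. pose proof (count_fc (I d) d). lia. Qed.

Lemma ln_le' x y : 0 < x -> x <= y -> ln x <= ln y.
Proof. intros Hx Hxy. destruct (Rle_lt_or_eq_dec _ _ Hxy) as [H|H].
  left; apply ln_increasing; auto. rewrite H; lra. Qed.

Lemma exp_le' x y : x <= y -> exp x <= exp y.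
Proof. intros Hxy. destruct (Rle_lt_or_eq_dec _ _ Hxy) as [H|H].
  left; apply exp_increasing; auto. rewrite H; lra. Qed.

Lemma ln2_pos : 0 < ln 2.
Proof. rewrite <- ln_1. apply ln_increasing; lra. Qed.

Lemma key (lam : nat -> R) (I : nat -> nat -> bool)
  (Hnonneg : forall m, 0 <= lam m) (Hlam2 : lam 1%nat > 0) (Hlam1 : lam 0%nat >= 1)
  (C p : R) (HC : C > 0) (Hp : p > 0) :
  exists M : nat, forall d T, T > 0 ->
    (forall eps, 0 < eps <= 1 -> info_compl_le lam I eps d (C * Rpower eps (-p) * T)) ->
    INR (b_of I d) <= INR M * ((ln C + p * ln 2 / 2 + ln T) / ln 2 + 1).
Proof.
  set (mu := Rmin 1 (lam 1%nat)).
  assert (Hmu : 0 < mu) by (apply Rmin_glb_lt; lra).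
  assert (Hmu1 : mu <= 1) by apply Rmin_l.
  assert (Hmu2 : mu <= lam 1%nat) by apply Rmin_r.
  assert (Hlnmu : ln mu <= 0) by (rewrite <- ln_1; apply ln_le'; lra).
  set (al := - p * ln mu / 2).
  assert (Hal : 0 <= al) by (unfold al; nra).
  destruct (INR_unbounded (exp (ln 2 + al))) as [M HM].
  pose proof (exp_pos (ln 2 + al)) as Hep.
  assert (HM0 : M <> 0%nat) by (intro E; subst M; simpl in HM; lra).
  exists M. intros d T HT H.
  pose proof ln2_pos as Hl2.
  set (b := b_of I d). set (j := (b / M)%nat).
  assert (Hj0 : 0 <= INR j) by apply pos_INR.
  set (e := exp ((INR j * ln mu - ln 2) / 2)).
  assert (He0 : 0 < e) by apply exp_pos.
  assert (He1 : e <= 1).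
  { rewrite <- exp_0. apply exp_le'. assert (INR j * ln mu <= 0) by nra. lra. }
  assert (He2 : e ^ 2 = exp (INR j * ln mu - ln 2)).
  { unfold e. simpl. rewrite Rmult_1_r, <- exp_plus. f_equal. field. }
  assert (Hmuj : mu ^ j = exp (INR j * ln mu)).
  { rewrite <- ln_pow by auto. rewrite exp_ln; auto. apply pow_lt; auto. }
  assert (Hlt : e ^ 2 < mu ^ j).
  { rewrite He2, Hmuj. apply exp_increasing. lra. }
  specialize (H e (conj He0 He1) (gen (I d) 0 d j) (gen_nodup _ _ _ _)).
  assert (Hin : forall k, In k (gen (I d) 0 d j) -> in_nabla_sym I d k /\ lam_prod lam k > e ^ 2).
  { intros k Hk. destruct (gen_prop lam mu (I d) ltac:(lra) Hmu Hmu2 d 0 j k Hk) as [A [B D]].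
    split; [split; auto|lra].
    intros i0 j0 Hij Hi Hj. rewrite (B i0), (B j0); auto; lia. }
  specialize (H Hin). rewrite gen_len, <- b_of_fc in H. fold b in H.
  assert (Hpc : (M ^ j <= pc b j)%nat).
  { pose proof (Nat.div_mod b M HM0). fold j in H0. rewrite H0.
    eapply Nat.le_trans; [apply pc_pow|apply pc_mono_add]. }
  apply le_INR in Hpc. rewrite pow_INR in Hpc.
  assert (HR : Rpower e (-p) = exp (- p * ((INR j * ln mu - ln 2) / 2))).
  { unfold Rpower, e. rewrite ln_exp. reflexivity. }
  rewrite HR in H.
  assert (HMpos : 0 < INR M) by lra.
  assert (Hln : INR j * ln (INR M) <= ln C + - p * ((INR j * ln mu - ln 2) / 2) + ln T).
  { rewrite <- ln_pow by auto. rewrite <- (ln_exp (- p * _)), <- !ln_mult; try apply exp_pos; auto.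
    apply ln_le'. apply pow_lt; auto. lra. apply Rmult_lt_0_compat; auto; apply exp_pos. }
  assert (HlnM : ln 2 + al <= ln (INR M)).
  { rewrite <- (ln_exp (ln 2 + al)). apply ln_le'; auto; lra. }
  assert (Hjb : INR j * ln 2 <= ln C + p * ln 2 / 2 + ln T).
  { assert (INR j * (ln 2 + al) <= INR j * ln (INR M)) by (apply Rmult_le_compat_l; auto).
    unfold al in *. nra. }
  assert (Hj : INR j <= (ln C + p * ln 2 / 2 + ln T) / ln 2).
  { apply (Rmult_le_reg_r (ln 2)); auto. unfold Rdiv. rewrite Rmult_assoc, Rinv_l, Rmult_1_r; lra. }
  assert (Hb : (b <= M * S j)%nat) by (pose proof (Nat.mul_succ_div_gt b M HM0); fold j in H0; lia).
  apply le_INR in Hb. rewrite mult_INR, S_INR in Hb.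
  eapply Rle_trans; [exact Hb|]. apply Rmult_le_compat_l; lra.
Qed.

Lemma lam_prod_app lam l1 l2 : lam_prod lam (l1 ++ l2) = lam_prod lam l1 * lam_prod lam l2.
Proof. induction l1; simpl. lra. unfold lam_prod in *. rewrite IHl1. lra. Qed.

Lemma lam_prod_repeat lam m n : lam_prod lam (repeat m n) = lam m ^ n.
Proof. induction n; simpl. reflexivity. unfold lam_prod in *. rewrite IHn. reflexivity. Qed.

Lemma nth_rep (a b i : nat) :
  nth i (repeat 0%nat a ++ repeat 1%nat b) 0%nat =
  if Nat.ltb i a then 0%nat else if Nat.ltb i (a + b) then 1%nat else 0%nat.
Proof. destruct (Nat.ltb_spec i a).
  - rewrite app_nth1 by (rewrite repeat_length; lia). apply nth_repeat_lt; auto.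
  - rewrite app_nth2 by (rewrite repeat_length; lia). rewrite repeat_length.
    destruct (Nat.ltb_spec i (a+b)).
    + apply nth_repeat_lt; lia.
    + apply nth_overflow. rewrite repeat_length; lia.
Qed.

Lemma second (lam : nat -> R) (I : nat -> nat -> bool)
  (Hnonneg : forall m, 0 <= lam m) (Hlam2 : lam 1%nat > 0) (Hlam1 : lam 0%nat >= 1) :
  strongly_poly_tractable lam I -> lam 1%nat < 1 / lam 0%nat.
Proof.
  intros [C [p [HC [Hp H]]]].
  destruct (Rlt_or_le (lam 1%nat) (1 / lam 0%nat)) as [Hl|Hl]; auto. exfalso.
  assert (Hprod : 1 <= lam 0%nat * lam 1%nat).
  { apply (Rmult_le_compat_l (lam 0%nat)) in Hl; [|lra].
    replace (lam 0%nat * (1 / lam 0%nat)) with 1 in Hl by (field; lra). lra. }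
  destruct (INR_unbounded (C * Rpower (1/2) (-p))) as [m0 Hm0].
  set (m := S m0).
  set (f := fun t : nat => repeat 0%nat (m + t) ++ repeat 1%nat (m - t)).
  specialize (H (2 * m)%nat (1/2) ltac:(unfold m; lia) ltac:(lra) (map f (seq 0 (S m)))).
  assert (Hinj : Injective f).
  { intros x y Hxy. apply (f_equal (fun l => count_occ Nat.eq_dec l 0%nat)) in Hxy.
    unfold f in Hxy. rewrite !count_occ_app, !count_occ_repeat_eq, !count_occ_repeat_neq in Hxy
      by congruence. rewrite (count_occ_repeat_eq Nat.eq_dec (x:=0%nat) (y:=0%nat)), (count_occ_repeat_neq Nat.eq_dec (x:=0%nat) (y:=1%nat)) in Hxy by congruence. lia. }
  specialize (H (Injective_map_NoDup Hinj (seq_NoDup _ _))).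
  assert (Hin : forall k, In k (map f (seq 0 (S m))) ->
    in_nabla_sym I (2 * m) k /\ lam_prod lam k > (1/2) ^ 2).
  { intros k Hk. apply in_map_iff in Hk as [t [<- Ht]]. apply in_seq in Ht.
    split; [split|].
    - unfold f. rewrite length_app, !repeat_length. lia.
    - intros i j Hij _ _. unfold f. rewrite !nth_rep.
      destruct (Nat.ltb_spec i (m+t)); [lia|].
      destruct (Nat.ltb_spec j (m+t)); [lia|].
      destruct (Nat.ltb_spec j (m+t+(m-t))); [|lia].
      destruct (Nat.ltb_spec i (m+t+(m-t))); lia.
    - unfold f. rewrite lam_prod_app, !lam_prod_repeat.
      replace (m + t)%nat with (t + t + (m - t))%nat by lia.
      rewrite pow_add, Rmult_assoc, <- Rpow_mult_distr.
      pose proof (pow_R1_Rle (lam 0%nat) (t + t) ltac:(lra)).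
      pose proof (pow_R1_Rle (lam 0%nat * lam 1%nat) (m - t) Hprod). nra. }
  specialize (H Hin). rewrite length_map, length_seq in H.
  rewrite S_INR in H. unfold m in H. rewrite S_INR in H. pose proof (pos_INR m0). lra.
Qed.

Theorem proposition4 (lam : nat -> R) (I : nat -> nat -> bool)
  (Hnonneg : forall m, 0 <= lam m)
  (Hdecr : forall m, lam (S m) <= lam m)
  (Hcompact : Un_cv lam 0)
  (Hlam2 : lam 1%nat > 0)
  (HI : index_family I)
  (Hinit : forall d : nat, (1 <= d)%nat -> lam 0%nat ^ d > 0)
  (Hlam1 : lam 0%nat >= 1) :
  (poly_tractable lam I ->
     exists (K : R) (d0 : nat), forall d : nat, (d0 <= d)%nat ->
       INR (b_of I d) <= K * ln (INR d))
  /\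
  (strongly_poly_tractable lam I ->
     (exists K : R, forall d : nat, (1 <= d)%nat -> INR (b_of I d) <= K)
     /\ lam 1%nat < 1 / lam 0%nat).
Proof.
  pose proof ln2_pos as Hl2.
  split.
  - intros [C [p [q [HC [Hp [Hq H]]]]]].
    destruct (key lam I Hnonneg Hlam2 Hlam1 C p HC Hp) as [M HM].
    set (A := ln C + p * ln 2 / 2).
    exists (INR M * ((Rabs A + q) / ln 2 + 1)), 3%nat. intros d Hd.
    assert (Hd3 : 3 <= INR d) by (apply le_INR in Hd; simpl in Hd; lra).
    assert (HL : 1 <= ln (INR d)).
    { rewrite <- (ln_exp 1). apply ln_le'. apply exp_pos. pose proof exp_le_3. lra. }
    assert (HT : Rpower (INR d) q > 0) by apply exp_pos.
    specialize (HM d _ HT (fun eps He => H d eps ltac:(lia) He)).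
    assert (HlnT : ln (Rpower (INR d) q) = q * ln (INR d)) by (unfold Rpower; apply ln_exp).
    rewrite HlnT in HM. fold A in HM.
    eapply Rle_trans; [exact HM|].
    pose proof (pos_INR M). pose proof (Rle_abs A). pose proof (Rabs_pos A).
    set (L := ln (INR d)) in *. set (iv := / ln 2).
    assert (Hiv : 0 < iv) by (apply Rinv_0_lt_compat; auto).
    unfold Rdiv. fold iv. rewrite Rmult_assoc.
    apply Rmult_le_compat_l; auto.
    assert (A <= Rabs A * L) by nra. nra.
  - intros Hs. split; [|apply (second lam I); auto].
    destruct Hs as [C [p [HC [Hp H]]]].
    destruct (key lam I Hnonneg Hlam2 Hlam1 C p HC Hp) as [M HM].
    exists (INR M * ((ln C + p * ln 2 / 2 + ln 1) / ln 2 + 1)). intros d Hd.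
    apply HM. lra. intros eps He. rewrite Rmult_1_r. apply H; auto.
Qed.
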